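(* Let $p,q\ge 1$ be integers. For an integer $n\ge 1$, let $\mathcal{M}^{[1,1+n]}$ denote the Lie group whose underlying manifold is $\mathbb{R}\times\mathbb{R}^{n}$, with points written $\Upsilon=[\Upsilon_1,\boldsymbol{\Upsilon}_2]^\intercal$ ($\Upsilon_1\in\mathbb{R}$, $\boldsymbol{\Upsilon}_2\in\mathbb{R}^n$), and with group operation $$\Psi*\Upsilon=\begin{bmatrix}\Upsilon_1+\Psi_1\\ \boldsymbol{\Upsilon}_2+e^{-\Upsilon_1}\boldsymbol{\Psi}_2\end{bmatrix}.$$ Let $h:\mathcal{M}^{[1,1+q]}\to\mathcal{M}^{[1,1+p]}$ be a Lie group homomorphism whose image $h(\mathcal{M}^{[1,1+q]})$ has dimension greater than $1$. Then there exist a unique matrix $W\in\mathbb{R}^{p\times q}$ and a unique vector $\boldsymbol{b}\in\mathbb{R}^p$ such that for all $\Upsilon\in\mathcal{M}^{[1,1+q]}$, $$h(\Upsilon)=\begin{bmatrix}\Upsilon_1\\ W\boldsymbol{\Upsilon}_2+(1-e^{-\Upsilon_1})\,\boldsymbol{b}\end{bmatrix}.$$ Conversely, for every pair $(W,\boldsymbol{b})\in\mathbb{R}^{p\times q}\times\mathbb{R}^p$, the map $h$ defined by this formula is a Lie group homomorphism $\mathcal{M}^{[1,1+q]}\to\mathcal{M}^{[1,1+p]}$.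
   Context: The group $\mathcal{M}^{[1,1+n]}$ is the solvable Lie group metrically equivalent to the hyperbolic space $\mathbb{H}^{n+1}\simeq \mathrm{SO}(1,1+n)/\mathrm{SO}(1+n)$, described in ''solvable coordinates'' $\Upsilon=[\Upsilon_1,\boldsymbol{\Upsilon}_2]$; its identity element is $\Upsilon=\boldsymbol{0}$. Equivalently, it is the group of real $(n+2)\times(n+2)$ matrices $$\mathbb{L}(\Upsilon)=\begin{bmatrix}e^{\Upsilon_1}&\sqrt2 e^{\Upsilon_1}\boldsymbol{\Upsilon}_2^\intercal&-e^{\Upsilon_1}|\boldsymbol{\Upsilon}_2|^2\\0&\mathbb{I}_n&-\sqrt2\boldsymbol{\Upsilon}_2\\0&0&e^{-\Upsilon_1}\end{bmatrix}$$ under matrix multiplication, with $\mathbb{L}(\Psi*\Upsilon)=\mathbb{L}(\Psi)\mathbb{L}(\Upsilon)$. *)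

(* Defs.v *)
From HB Require Import structures.
From mathcomp Require Import all_boot all_order all_algebra.
From mathcomp Require Import all_classical all_reals all_analysis.
Set Implicit Arguments. Unset Strict Implicit. Unset Printing Implicit Defensive.
Import Order.TTheory GRing.Theory Num.Theory.
Import numFieldNormedType.Exports.
Local Open Scope ring_scope.

Definition Mpt (R : realType) (n : nat) := (R * 'cV[R]_n)%type.

Definition Mmul (R : realType) (n : nat) (Psi Ups : Mpt R n) : Mpt R n :=
  (Ups.1 + Psi.1, Ups.2 + expR (- Ups.1) *: Psi.2).

Fixpoint Ck (R : realType) (U V : normedModType R) (k : nat) (f : U -> V) : Prop :=
  match k with
  | 0%N => continuous f
  | k'.+1 => (forall x, differentiable f x) /\ (forall v : U, Ck k' (fun x => 'D_v f x))
  end.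

Definition smooth (R : realType) (U V : normedModType R) (f : U -> V) : Prop :=
  forall k, Ck k f.

Definition lie_hom (R : realType) (q p : nat) (h : Mpt R q -> Mpt R p) : Prop :=
  smooth h /\ forall Psi Ups, h (Mmul Psi Ups) = Mmul (h Psi) (h Ups).

(* The image of a Lie group homomorphism is an (immersed) Lie subgroup whose
   dimension is the rank of the differential of h at the identity 0.
   "dimension > 1" = this rank is at least 2, i.e. the range of 'd h 0
   contains two linearly independent vectors. *)
Definition image_dim_gt1 (R : realType) (q p : nat) (h : Mpt R q -> Mpt R p) : Prop :=
  exists u v : Mpt R q,
    forall a b : R, a *: ('d h 0 u) + b *: ('d h 0 v) = 0 -> a = 0 /\ b = 0.

Definition affine_hom (R : realType) (q p : nat) (W : 'M[R]_(p, q)) (b : 'cV[R]_p)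
  (Ups : Mpt R q) : Mpt R p :=
  (Ups.1, W *m Ups.2 + (1 - expR (- Ups.1)) *: b).

(* Main.v *)
Require Import Defs.
From HB Require Import structures.
From mathcomp Require Import all_boot all_order all_algebra.
From mathcomp Require Import all_classical all_reals all_analysis.
Import Order.TTheory GRing.Theory Num.Theory.
Import numFieldNormedType.Exports.
Local Open Scope ring_scope.

Section LinD.
Variables (R : realType) (q p : nat).

Lemma lin_diff (U V : normedModType R) (f : U -> V) (x : U) : linear f -> continuous f ->
  differentiable f x /\ 'd f x = f :> (U -> V).
Proof.
move=> fl fc.
pose fL : {linear _ -> _} := HB.pack f (GRing.isLinear.Build _ _ _ _ _ fl).
split; first exact: (@linear_differentiable _ _ _ fL).
exact: (@diff_lin _ _ _ fL).
Qed.
End LinD.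
From mathcomp Require Import lra ring.
Lemma additive_id (R : realType) (m : R -> R) :
  (forall c, 0 < c -> 0 < m c) ->
  (forall c d, 0 < c -> 0 < d -> m (c + d) = m c + m d) -> m 1 = 1 ->
  forall c, 0 < c -> m c = c.
Proof.
move=> mpos mD m1.
have mn : forall n, m n.+1%:R = n.+1%:R.
  elim=> [|n IH]; first by rewrite m1.
  by rewrite -addn1 natrD mD ?ltr0Sn // IH m1.
have mnc : forall n c, 0 < c -> m (n.+1%:R * c) = n.+1%:R * m c.
  elim=> [|n IH] c c0; first by rewrite !mul1r.
  rewrite -addn1 natrD mulrDl mul1r mD ?IH ?mulr_gt0 ?ltr0Sn //.
  by rewrite mulrDl mul1r.
have mono : forall c d, 0 < c -> c < d -> m c < m d.
  move=> c d c0 cd; have -> : d = c + (d - c) by rewrite addrC subrK.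
  by rewrite mD ?subr_gt0 // ltrDl mpos // subr_gt0.
move=> c c0; case: (ltgtP (m c) c) => // H; exfalso.
- set N := (Num.bound (1 / (c - m c))).+1.
  have hN : 1 < N%:R * (c - m c).
    have := archi_boundP (x := 1 / (c - m c)); rewrite divr_ge0 ?subr_ge0 ?(ltW H) // => /(_ isT) hb.
    have : 1 / (c - m c) < N%:R by apply: (lt_le_trans hb); rewrite ler_nat.
    by rewrite ltr_pdivrMr ?subr_gt0.
  set x := N%:R * m c.
  have x0 : 0 <= x by rewrite mulr_ge0 // ltW // mpos.
  set k := (Num.truncn x).+1.
  have k1 : x < k%:R by apply: truncnS_gt.
  have k2 : k%:R <= x + 1 by rewrite /k -addn1 natrD lerD2r truncn_le.
  have k3 : k%:R < N%:R * c.
    apply: (le_lt_trans k2); rewrite /x; move: hN; rewrite mulrBr; lra.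
  have := mono _ _ (ltr0Sn _ _) k3; rewrite mnc // mn -/x.
  move=> h; have := lt_trans k1 h; rewrite ltxx //.
- set N := (Num.bound (1 / (m c - c))).+1.
  have hN : 1 < N%:R * (m c - c).
    have := archi_boundP (x := 1 / (m c - c)); rewrite divr_ge0 ?subr_ge0 ?(ltW H) // => /(_ isT) hb.
    have : 1 / (m c - c) < N%:R by apply: (lt_le_trans hb); rewrite ler_nat.
    by rewrite ltr_pdivrMr ?subr_gt0.
  set x := N%:R * c.
  have x0 : 0 <= x by rewrite mulr_ge0 // ltW.
  set k := (Num.truncn x).+1.
  have k1 : x < k%:R by apply: truncnS_gt.
  have k2 : k%:R <= x + 1 by rewrite /k -addn1 natrD lerD2r truncn_le.
  have k3 : k%:R < N%:R * m c.
    apply: (le_lt_trans k2); rewrite /x; move: hN; rewrite mulrBr; lra.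
  have := mono _ _ (mulr_gt0 (ltr0Sn _ _) c0) k1; rewrite mnc // mn.
  move=> h; have := lt_trans h k3; rewrite ltxx //.
Qed.
Section Alg.
Variables (R : realType) (q p : nat) (h : Mpt R q -> Mpt R p).
Hypothesis hom : forall Psi Ups, h (Mmul Psi Ups) = Mmul (h Psi) (h Ups).

Let A (v : 'cV[R]_q) : R := (h (0, v)).1.
Let W (v : 'cV[R]_q) : 'cV[R]_p := (h (0, v)).2.
Let phi (t : R) : R := (h (t, 0)).1.
Let g (t : R) : 'cV[R]_p := (h (t, 0)).2.

Lemma mm1 t u : Mmul ((t, 0) : Mpt R q) (0, u) = (t, u).
Proof. by rewrite /Mmul /= add0r scaler0 addr0. Qed.
Lemma mm2 v w : Mmul ((0, v) : Mpt R q) (0, w) = (0, w + v).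
Proof. by rewrite /Mmul /= addr0 oppr0 expR0 scale1r. Qed.
Lemma mm3 v t : Mmul ((0, v) : Mpt R q) (t, 0) = (t, expR (- t) *: v).
Proof. by rewrite /Mmul /= addr0 add0r. Qed.
Lemma mm4 s t : Mmul ((s, 0) : Mpt R q) (t, 0) = (t + s, 0).
Proof. by rewrite /Mmul /= scaler0 addr0. Qed.

Lemma hform t u : h (t, u) = (A u + phi t, W u + expR (- A u) *: g t).
Proof. by have := hom (t, 0) (0, u); rewrite mm1 => ->. Qed.

Lemma Aadd v w : A (w + v) = A w + A v.
Proof. by rewrite /A -mm2 hom. Qed.

Lemma A0 v : A v = 0.
Proof.
have key : forall t v, A (expR (- t) *: v) = A v.
  move=> t v'; have := hom (0, v') (t, 0); rewrite mm3 hform /Mmul /= => /(congr1 fst) /=.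
  rewrite -/(A v') -/(phi t) => H; lra.
have := key (- ln 2) v; rewrite opprK lnK ?posrE // scaler_nat mulr2n Aadd; lra.
Qed.

Lemma A0' v : (h (0, v)).1 = 0.
Proof. exact: A0. Qed.

Lemma Wadd v w : W (w + v) = W w + W v.
Proof. by rewrite /W -mm2 hom /Mmul /= -/(A w) A0 oppr0 expR0 scale1r. Qed.

Lemma W0 : W 0 = 0.
Proof. by have := Wadd 0 0; rewrite addr0 -{1}[W 0]addr0 => /addrI <-. Qed.

Lemma WN v : W (- v) = - W v.
Proof. by apply/eqP; rewrite -subr_eq0 opprK addrC -Wadd subrr W0. Qed.

Lemma hform' t u : h (t, u) = (phi t, W u + g t).
Proof. by rewrite hform (A0 u) oppr0 expR0 scale1r add0r. Qed.

Lemma Wsc t v : W (expR (- t) *: v) = expR (- phi t) *: W v.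
Proof.
have := hom (0, v) (t, 0); rewrite mm3 hform' /Mmul /= => /(congr1 snd) /=.
by rewrite addrC => /addrI.
Qed.

Lemma phiD s t : phi (t + s) = phi t + phi s.
Proof. by rewrite /phi -mm4 hom. Qed.

Lemma gD s t : g (t + s) = g t + expR (- phi t) *: g s.
Proof. by rewrite /g -mm4 hom. Qed.

Lemma phi0 : phi 0 = 0.
Proof. by have := phiD 0 0; rewrite addr0 => H; lra. Qed.

Lemma phi_id (v0 : 'cV[R]_q) : W v0 != 0 -> forall t, phi t = t.
Proof.
move=> Wv0.
have [i [k Hik]] : exists i k, W v0 i k != 0.
  apply: contrapT => H; move/eqP: Wv0; apply; apply/matrixP => i k; rewrite mxE.
  by case: (eqVneq (W v0 i k) 0) => // Hn; exfalso; apply: H; exists i, k.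
pose m c := expR (- phi (- ln c)).
have Wm : forall c, 0 < c -> W (c *: v0) = m c *: W v0.
  by move=> c c0; rewrite -Wsc opprK lnK // posrE.
have mid := @additive_id R m.
have mc : forall c, 0 < c -> m c = c.
  apply: mid; first by move=> c _; exact: expR_gt0.
    move=> c d c0 d0; apply: (mulIf Hik).
    have := congr1 (fun M : 'cV[R]_p => M i k) (Wm (c + d) (addr_gt0 c0 d0)).
    rewrite scalerDl Wadd Wm // Wm // !mxE => <-; by rewrite mulrDl.
  by rewrite /m ln1 oppr0 phi0 oppr0 expR0.
move=> t; have := mc (expR (- t)) (expR_gt0 _).
by rewrite /m expRK opprK => /expR_inj /oppr_inj.
Qed.

Lemma W_lin (v0 : 'cV[R]_q) : W v0 != 0 -> forall (a : R) v, W (a *: v) = a *: W v.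
Proof.
move=> Wv0.
have pos : forall c v, 0 < c -> W (c *: v) = c *: W v.
  move=> c v c0; have := Wsc (- ln c) v.
  by rewrite opprK lnK ?posrE // (phi_id v0 Wv0) opprK lnK ?posrE.
move=> a v; case: (ltgtP a 0) => Ha.
- have := pos (- a) v; rewrite oppr_gt0 => /(_ Ha).
  by rewrite scaleNr WN scaleNr => /oppr_inj.
- exact: pos.
- by rewrite Ha !scale0r W0.
Qed.

Lemma W_mx (v0 : 'cV[R]_q) : W v0 != 0 ->
  exists M : 'M[R]_(p, q), forall u, W u = M *m u.
Proof.
move=> Wv0; exists (\matrix_(i, j) (W (delta_mx j 0)) i 0) => u.
rewrite {1}[u]matrix_sum_delta.
rewrite (@big_morph _ _ W 0 +%R 0 +%R (fun x y => Wadd y x) W0).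
apply/matrixP => i k; rewrite (ord1 k) !mxE summxE.
apply: eq_bigr => j _; rewrite big_ord1 (W_lin v0 Wv0) !mxE mulrC.
done.
Qed.

Lemma g_form (v0 : 'cV[R]_q) : W v0 != 0 ->
  exists b : 'cV[R]_p, forall t, g t = (1 - expR (- t)) *: b.
Proof.
move=> Wv0; have pid := phi_id v0 Wv0.
have e1 : 1 - expR (- 1) != 0 :> R.
  by rewrite subr_eq0 eq_sym lt_eqF // expR_lt1 ltrN10.
exists ((1 - expR (- 1))^-1 *: g 1) => t.
have := gD 1 t; rewrite addrC gD !pid => H.
apply: (scalerI e1); rewrite !scalerA mulrAC mulfV // mul1r.
rewrite !scalerBl !scale1r; apply/eqP; rewrite subr_eq addrAC eq_sym subr_eq.
by rewrite H.
Qed.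

Lemma W_nz : (forall x, differentiable h x) -> image_dim_gt1 h ->
  exists v0, W v0 != 0.
Proof.
move=> dh img; case: (pselect (exists v0, W v0 != 0)) => // nW; exfalso.
have Wz : forall v, W v = 0.
  by move=> v; case: (eqVneq (W v) 0) => // H; exfalso; apply: nW; exists v.
pose pi := fun x : Mpt R q => ((x.1, 0) : Mpt R q).
have hpi : h \o pi = h.
  apply/funext => -[t u] /=; rewrite /pi /= !hform' Wz.
  by rewrite (Wz u) ?Wz.
have pil : linear pi.
  move=> a x y; rewrite /pi /=; congr pair.
  change (0 = a *: (0 : 'cV[R]_q) + 0).
  by rewrite scaler0 addr0.
have fc : continuous (fst : Mpt R q -> R) by move=> z; exact: cvg_fst.
have fl : linear (fst : Mpt R q -> R) by [].
have [dfst ddfst] := lin_diff R _ _ _ (0 : Mpt R q) fl fc.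
have Ifst : is_diff (0 : Mpt R q) fst fst by exact: DiffDef dfst ddfst.
have Ipi := is_diff_pair Ifst (is_diff_cst (0 : 'cV[R]_q) (0 : Mpt R q)).
have I1 : is_diff 0 pi pi by exact: Ipi.
have I2 : is_diff (pi 0) h ('d h 0) by exact: DiffDef (dh _) erefl.
have I := is_diff_comp I1 I2.
rewrite hpi in I.
have dv := @diff_val _ _ _ _ _ _ _ I.
have key : forall w, 'd h 0 w = w.1 *: 'd h 0 ((1, 0) : Mpt R q).
  move=> w; have -> : 'd h 0 w = 'd h 0 (pi w) by exact: (congr1 (fun F => F w) dv).
  have -> : pi w = w.1 *: ((1, 0) : Mpt R q).
    rewrite /pi; congr pair.
      by change (w.1 = w.1 * 1); rewrite mulr1.
    by change (0 = w.1 *: (0 : 'cV[R]_q)); rewrite scaler0.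
  exact: linearZ.
case: img => u [v Hind].
set X := 'd h 0 ((1, 0) : Mpt R q).
have E1 : v.1 *: 'd h 0 u + (- u.1) *: 'd h 0 v = 0.
  rewrite (key u) (key v) !scalerA mulNr scaleNr [u.1 * v.1]mulrC.
  by rewrite subrr.
have [v10 u10] := Hind _ _ E1.
have u10' : u.1 = 0 by lra.
have E2 : 1 *: 'd h 0 u + 0 *: 'd h 0 v = 0.
  by rewrite (key u) u10' !scale0r scaler0 addr0.
have [] := Hind _ _ E2.
by move=> /eqP; rewrite oner_eq0.
Qed.

End Alg.
Section Smooth.
Variables (R : realType) (q p : nat).



Let e (x : Mpt R q) : R := expR (- x.1).

Lemma e_diff (x : Mpt R q) : differentiable e x /\ 'd e x = (fun v => (- v.1) * e x) :> (Mpt R q -> R).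
Proof.
pose g := fun y : Mpt R q => - y.1.
have gl : linear g by move=> a u v; rewrite /g /= opprD -scalerN.
pose glM := GRing.isLinear.Build _ _ _ _ _ gl.
pose gL : {linear _ -> _} := HB.pack g glM.
have gc : continuous (fun y : Mpt R q => - y.1).
  move=> y; apply: continuous_comp; first exact: cvg_fst.
  exact: opp_continuous.
have dg : differentiable (fun y : Mpt R q => - y.1) x by exact: (@linear_differentiable _ _ _ gL).
have dE : differentiable (@expR R) (- x.1) by apply/derivable1_diffP/derivable_expR.
have -> : e = expR \o (fun y : Mpt R q => - y.1) by [].
split; first exact: differentiable_comp.
rewrite diff_comp // (@diff_lin _ _ _ gL) // deriv1E; last exact: derivable_expR.
by apply/funext => v /=; rewrite derive1E (@derive_val _ _ _ _ _ _ _ (is_derive_expR (- x.1))) /g /e.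
Qed.

Definition Fam (f : Mpt R q -> Mpt R p) (C D : Mpt R p) (x : Mpt R q) : Mpt R p :=
  f x + C + e x *: D.

Lemma Fam_diff (f : Mpt R q -> Mpt R p) (C D : Mpt R p) (x : Mpt R q) : linear f -> continuous f ->
  differentiable (Fam f C D) x /\
  'd (Fam f C D) x = (fun v => f v + e x *: (- v.1 *: D)) :> (Mpt R q -> Mpt R p).
Proof.
move=> fl fc; have [df ddf] := lin_diff R _ _ f x fl fc.
have [de dde] := e_diff x.
have -> : Fam f C D = (f + cst C) + (fun z => e z *: D) by [].
have d1 : differentiable (f + cst C) x by apply: differentiableD.
have d2 : differentiable (fun z => e z *: D) x by apply: differentiableZl.
have I1 : is_diff x f f by exact: DiffDef df ddf.
have I2 : is_diff x (fun z => e z *: D) (fun v => (- v.1 * e x) *: D).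
  apply: DiffDef d2 _.
  rewrite (diffZl _ de).
  by rewrite dde.
have I := is_diffD (is_diffD I1 (is_diff_cst C x)) I2.
split; first exact: (@ex_diff _ _ _ _ _ _ _ I).
rewrite (@diff_val _ _ _ _ _ _ _ I).
apply/funext => v /=.
by rewrite addr0 !scalerA mulrC.
Qed.

Lemma Fam_Ck k : forall (f : Mpt R q -> Mpt R p) (C D : Mpt R p), linear f -> continuous f -> Ck k (Fam f C D).
Proof.
elim: k => [|k IH] f C D fl fc /=.
  by move=> x; apply: differentiable_continuous; have [] := Fam_diff f C D x fl fc.
split; first by move=> x; have [] := Fam_diff f C D x fl fc.
move=> v.
have -> : (fun x => 'D_v (Fam f C D) x) = Fam (fun _ => 0) (f v) (- v.1 *: D).
  apply/funext => x; have [dF ddF] := Fam_diff f C D x fl fc.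
  by rewrite deriveE // ddF /Fam add0r.
apply: IH; first by move=> a u w; rewrite scaler0 addr0.
exact: cst_continuous.
Qed.

End Smooth.
Section Lin.
Variables (R : realType) (q p : nat).
Lemma mulmx_cont (W : 'M[R]_(p, q)) : continuous (fun v : 'cV[R]_q => W *m v).
Proof.
have -> : (fun v : 'cV[R]_q => W *m v) = \sum_(j < q) (fun v : 'cV[R]_q => v j 0 *: col j W).
  apply/funext => v; rewrite fct_sumE; apply/matrixP => i k.
  rewrite !mxE summxE; apply: eq_bigr => j _; rewrite !mxE (ord1 k) mulrC.
  done.
move=> x; apply: differentiable_continuous; apply: differentiable_sum => j.
apply: differentiableZl; exact: differentiable_coord.
Qed.
End Lin.

Lemma affine_smooth (R : realType) (q p : nat) (W : 'M[R]_(p, q)) (b : 'cV[R]_p) :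
  smooth (affine_hom W b).
Proof.
pose f := fun x : Mpt R q => ((x.1, W *m x.2) : Mpt R p).
have fl : linear f.
  move=> a x y; rewrite /f /=; congr pair.
  change (W *m (a *: x.2 + y.2) = a *: (W *m x.2) + W *m y.2).
  by rewrite mulmxDr scalemxAr.
have fc : continuous f.
  have c1 : continuous (fst : Mpt R q -> R) by move=> z; exact: cvg_fst.
  have c2 : continuous (snd : Mpt R q -> 'cV[R]_q) by move=> z; exact: cvg_snd.
  have l1 : linear (fst : Mpt R q -> R) by [].
  have l2 : linear (snd : Mpt R q -> 'cV[R]_q) by [].
  have l3 : linear (fun v : 'cV[R]_q => W *m v).
    by move=> a u v; rewrite mulmxDr scalemxAr.
  move=> x; apply: differentiable_continuous; rewrite /f.
  apply: differentiable_pair; first by have [] := lin_diff R _ _ _ x l1 c1.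
  have d2 : differentiable (snd : Mpt R q -> 'cV[R]_q) x by have [] := lin_diff R _ _ _ x l2 c2.
  have d3 : differentiable (fun v : 'cV[R]_q => W *m v) x.2.
    by have [] := lin_diff R _ _ _ x.2 l3 (mulmx_cont R q p W).
  exact: (differentiable_comp d2 d3).
have -> : affine_hom W b = Fam R q p f ((0, b) : Mpt R p) ((0, - b) : Mpt R p).
  apply/funext => x; rewrite /affine_hom /Fam /f /=; congr pair.
    by change (x.1 = x.1 + 0 + expR (- x.1) * 0); rewrite mulr0 !addr0.
  change (W *m x.2 + (1 - expR (- x.1)) *: b = W *m x.2 + b + expR (- x.1) *: (- b)).
  by rewrite scalerBl scale1r scalerN addrA.
by move=> k; apply: Fam_Ck.
Qed.

Lemma affine_homP (R : realType) (q p : nat) (W : 'M[R]_(p, q)) (b : 'cV[R]_p) Psi Ups :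
  affine_hom W b (Mmul Psi Ups) = Mmul (affine_hom W b Psi) (affine_hom W b Ups).
Proof.
rewrite /affine_hom /Mmul /=; congr pair.
rewrite opprD expRD mulmxDr -scalemxAr scalerDr scalerA.
set a := expR (- Ups.1); set c := expR (- Psi.1).
have -> : (1 - a * c) *: b = (1 - a) *: b + (a * (1 - c)) *: b.
  by rewrite -scalerDl; congr (_ *: _); ring.
by rewrite !addrA; congr (_ + _); rewrite addrAC.
Qed.

Theorem theorem2 (R : realType) (p q : nat) (hp : (1 <= p)%N) (hq : (1 <= q)%N) :
  (forall h : Mpt R q -> Mpt R p,
     lie_hom h -> image_dim_gt1 h ->
     exists! Wb : 'M[R]_(p, q) * 'cV[R]_p,
       forall Ups : Mpt R q, h Ups = affine_hom Wb.1 Wb.2 Ups) /\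
  (forall (W : 'M[R]_(p, q)) (b : 'cV[R]_p), lie_hom (affine_hom W b)).
Proof.
split; last first.
  move=> W b; split; first exact: affine_smooth.
  exact: affine_homP.
move=> h [hs hom] img.
have [dh _] := hs 1%N.
have [v0 Wv0] := W_nz R q p h hom dh img.
have [M HM] := W_mx R q p h hom v0 Wv0.
have [b Hb] := g_form R q p h hom v0 Wv0.
have pid := phi_id R q p h hom v0 Wv0.
have hf : forall Ups, h Ups = affine_hom M b Ups.
  move=> [t u]; rewrite (hform' R q p h hom) pid HM Hb.
  by [].
exists (M, b); split; first exact: hf.
move=> [W' b'] /= H'.
have E : forall Ups, affine_hom M b Ups = affine_hom W' b' Ups.
  by move=> Ups; rewrite -hf.
have EM : M = W'.
  apply/matrixP => i j.
  have := congr1 snd (E (0, delta_mx j 0)).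
  rewrite /affine_hom /= oppr0 expR0 subrr !scale0r !addr0 -!colE.
  by move=> /(congr1 (fun C : 'cV[R]_p => C i 0)); rewrite !mxE.
have Eb : b = b'.
  have := congr1 snd (E (1, 0)).
  rewrite /affine_hom /= EM mulmx0 !add0r.
  apply: scalerI.
  by rewrite subr_eq0 eq_sym lt_eqF // expR_lt1 ltrN10.
by rewrite EM Eb.
Qed.
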